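(* Let $I\subseteq R$ be a good ideal, let $a_1,\dots,a_n\in\mathbb N$ with $a=a_1+\dots+a_n$, and let $t\ge1$ be an integer. Then $$I^{a+t}:\langle\mu_1^{a_1}\cdots\mu_n^{a_n}\rangle=\sum_{\substack{t_1,\dots,t_n\ge0\\ t_1+\dots+t_n=t-1}}\mu_1^{t_1}\cdots\mu_n^{t_n}\, I_{t_1+a_1,\dots,t_n+a_n}.$$
   Context: Let $\mathbb K$ be a field, $R=\mathbb K[x_1,\dots,x_n]$, $\mathfrak m=\langle x_1,\dots,x_n\rangle$, $\mathbb N=\{0,1,2,\dots\}$. A monomial $x_1^{\alpha_1}\cdots x_n^{\alpha_n}$ is identified with the point $(\alpha_1,\dots,\alpha_n)\in\mathbb N^n$. For a monomial ideal $I$, $G(I)$ denotes its (unique) minimal monomial generating set. If $I$ is an $\mathfrak m$-primary monomial ideal, then for each $i$ there is a unique $d_i\ge1$ with $x_i^{d_i}\in G(I)$; write $\mu_i=x_i^{d_i}$. For $(a_1,\dots,a_n)\in\mathbb N^n$ the box associated to $I$ is $B_{a_1,\dots,a_n}=([a_1d_1,(a_1+1)d_1]\times\cdots\times[a_nd_n,(a_n+1)d_n])\cap\mathbb N^n$; a monomial belongs to a box if its exponent vector does. An $\mathfrak m$-primary monomial ideal $I$ is called good if for every integer $l\ge1$, every element of $G(I^l)$ belongs to some box $B_{a_1,\dots,a_n}$ with $a_1+\dots+a_n=l-1$. For a good ideal $I$ and $a=(a_1,\dots,a_n)\in\mathbb N^n$, with $l=a_1+\dots+a_n+1$, define $I_{a_1,\dots,a_n}=\left\langle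 \frac{m}{\mu_1^{a_1}\cdots\mu_n^{a_n}} : m\in B_{a_1,\dots,a_n}\cap G(I^l)\right\rangle$. *)

(* Defs.v *)
(* Monomial ideals of K[x_1,...,x_n] are modelled
   combinatorially by their sets of monomials (exponent vectors in N^n).
   A monomial x^u is identified with u : 'I_n -> nat. *)
From mathcomp Require Import all_boot.
Set Implicit Arguments. Unset Strict Implicit. Unset Printing Implicit Defensive.

Definition mon (n : nat) := 'I_n -> nat.
Definition mideal (n : nat) := mon n -> Prop.

Definition mzero (n : nat) : mon n := fun _ => 0.
Definition madd (n : nat) (u v : mon n) : mon n := fun i => u i + v i.
Definition mdvd (n : nat) (u v : mon n) : Prop := forall i, u i <= v i.
Definition xpow (n : nat) (i : 'I_n) (k : nat) : mon n :=
  fun j => if j == i then k else 0.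
(* mu_1^{a_1} ... mu_n^{a_n} = x_1^{a_1 d_1} ... x_n^{a_n d_n} *)
Definition mu_pow (n : nat) (d a : mon n) : mon n := fun i => a i * d i.

Definition is_monideal (n : nat) (I : mideal n) : Prop :=
  forall u v, I u -> mdvd u v -> I v.

Definition mgen (n : nat) (S : mon n -> Prop) : mideal n :=
  fun v => exists2 u, S u & mdvd u v.

Definition mingens (n : nat) (I : mideal n) : mon n -> Prop :=
  fun u => I u /\ (forall w, I w -> mdvd w u -> mdvd u w).

Definition mpow (n : nat) (I : mideal n) (l : nat) : mideal n :=
  fun v => exists f : 'I_l -> mon n,
    (forall j, I (f j)) /\ mdvd (fun i => \sum_(j < l) f j i) v.

Definition mcolon (n : nat) (J : mideal n) (u : mon n) : mideal n :=
  fun v => J (madd v u).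

Definition mmul (n : nat) (u : mon n) (J : mideal n) : mideal n :=
  mgen (fun w => exists2 v, J v & forall i, w i = u i + v i).

(* sum of the monomial ideals F t over the indices t with P t: a monomial
   lies in a sum of monomial ideals iff it lies in one of them *)
Definition msum (n : nat) (P : mon n -> Prop) (F : mon n -> mideal n)
  : mideal n := fun v => exists2 t, P t & F t v.

Definition in_box (n : nat) (d a m : mon n) : Prop :=
  forall i, a i * d i <= m i <= (a i).+1 * d i.

Definition m_primary_with (n : nat) (I : mideal n) (d : mon n) : Prop :=
  [/\ is_monideal I, ~ I (@mzero n) & forall i, mingens I (xpow i (d i))].

Definition good (n : nat) (I : mideal n) (d : mon n) : Prop :=
  m_primary_with I d /\
  (forall l, 0 < l -> forall m, mingens (mpow I l) m ->
     exists2 a : mon n, \sum_(i < n) a i = l.-1 & in_box d a m).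

Definition Isub (n : nat) (I : mideal n) (d a : mon n) : mideal n :=
  mgen (fun u => exists2 m,
          in_box d a m /\ mingens (mpow I (\sum_(i < n) a i).+1) m
          & forall i, u i = m i - a i * d i).

(* Main.v *)
Require Import Defs.
From mathcomp Require Import all_boot.
From mathcomp Require Import zify.
From Stdlib Require Import Classical.

Section Helpers.
Variable n : nat.
Implicit Types (u w x y : mon n).

Lemma le_sum1 x i : x i <= \sum_(q < n) x q.
Proof. by rewrite (bigD1 i) //= leq_addr. Qed.

Lemma sum_lt x y i : (forall q, x q <= y q) -> x i < y i ->
  \sum_(q < n) x q < \sum_(q < n) y q.
Proof.
move=> le lt; rewrite (bigD1 i) //= [X in _ < X](bigD1 i) //=.
have : \sum_(q < n | q != i) x q <= \sum_(q < n | q != i) y q by apply: leq_sum.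
move=> H; rewrite -addSn; exact: leq_add.
Qed.

Lemma sum_dec x i : 0 < x i ->
  \sum_(q < n) (x q - (q == i)) = (\sum_(q < n) x q).-1.
Proof.
move=> pos; rewrite (bigD1 i) //= [X in _ = X.-1](bigD1 i) //= eqxx.
rewrite (eq_bigr x); last by move=> q /negbTE ->; rewrite subn0.
lia.
Qed.

Lemma ex_pos x : 0 < \sum_(q < n) x q -> exists i, 0 < x i.
Proof.
move=> H; case: (boolP [exists q, 0 < x q]) => [/existsP//|/existsPn H2].
move: H; rewrite big1 // => q _; apply/eqP; move: (H2 q); by rewrite lt0n negbK.
Qed.

Lemma ex_gt x y : \sum_(q < n) x q < \sum_(q < n) y q -> exists i, x i < y i.
Proof.
move=> H; case: (boolP [exists q, x q < y q]) => [/existsP//|/existsPn H2].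
have : \sum_(q < n) y q <= \sum_(q < n) x q.
  by apply: leq_sum => q _; move: (H2 q); rewrite -leqNgt.
lia.
Qed.

Lemma intermediate k x y : (forall q, x q <= y q) ->
  \sum_(q < n) x q <= k <= \sum_(q < n) y q ->
  exists b : mon n, (forall q, x q <= b q <= y q) /\ \sum_(q < n) b q = k.
Proof.
move Hs: (\sum_(q < n) y q - k) => s.
elim: s y Hs => [|s IH] y Hs lexy /andP[h1 h2].
  exists y; split; last by lia.
  by move=> q; rewrite lexy leqnn.
have [i lti] : exists i, x i < y i by apply: ex_gt; lia.
pose y' : mon n := fun q => y q - (q == i).
have Hsum : \sum_(q < n) y' q = (\sum_(q < n) y q).-1 by apply: sum_dec; lia.
have [|||b [Hb1 Hb2]] := IH y'.
- by rewrite Hsum; lia.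
- move=> q; rewrite /y'; case: (q =P i) => [->|_] /=; first lia.
  by rewrite subn0.
- apply/andP; split=> //; rewrite Hsum; lia.
exists b; split=> // q; move: (Hb1 q); rewrite /y'.
have := lexy q; lia.
Qed.

Lemma ex_mingens (J : mideal n) u : J u -> exists m, mingens J m /\ mdvd m u.
Proof.
have : \sum_(q < n) u q <= \sum_(q < n) u q by [].
move: {-1}(\sum_(q < n) u q) => s.
elim: s u => [|s IH] u Hu Ju.
  exists u; split=> //; split=> // w Jw wu q.
  have := le_sum1 u q; have := wu q; lia.
case: (classic (forall w, J w -> mdvd w u -> mdvd u w)) => [H|].
  by exists u; split=> //.
move=> /not_all_ex_not [w Hw].
have [Jw Hw2] := imply_to_and _ _ Hw.
have [wu nuw] := imply_to_and _ _ Hw2.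
have [i lti] : exists i, w i < u i.
  case: (boolP [exists q, w q < u q]) => [/existsP//|/existsPn H2]; exfalso; apply: nuw => q.
  by move: (H2 q); rewrite -leqNgt.
have lts : \sum_(q < n) w q < \sum_(q < n) u q by exact: (sum_lt w u i wu lti).
have [m [Jm mw]] := IH w ltac:(lia) Jw.
by exists m; split=> // q; apply: leq_trans (mw q) (wu q).
Qed.
End Helpers.

Section Pow.
Variable n : nat.
Variable I : mideal n.

Lemma mpow_up l u v : mpow I l u -> mdvd u v -> mpow I l v.
Proof.
move=> [f [Hf Hd]] uv; exists f; split=> // i; exact: leq_trans (Hd i) (uv i).
Qed.

Lemma mpow0 v : mpow I 0 v.
Proof. by exists (fun _ => @mzero n); split=> [[]//|i]; rewrite big_ord0. Qed.

Lemma mpow1 u : I u -> mpow I 1 u.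
Proof.
move=> Iu; exists (fun _ => u); split=> // i; by rewrite big_ord1.
Qed.

Lemma mpow_add p q u w : mpow I p u -> mpow I q w -> mpow I (p + q) (madd u w).
Proof.
move=> [f1 [H1 D1]] [f2 [H2 D2]].
exists (fun j : 'I_(p + q) => match split j with inl x => f1 x | inr y => f2 y end).
split.
  by move=> j; case: (split j).
move=> i; rewrite big_split_ord /=.
rewrite (eq_bigr (fun j => f1 j i)); last first.
  by move=> j _; rewrite (unsplitK (inl j)).
rewrite [X in _ + X <= _](eq_bigr (fun j => f2 j i)); last first.
  by move=> j _; rewrite (unsplitK (inr j)).
exact: leq_add (D1 i) (D2 i).
Qed.

Lemma mpow_mul l u p : mpow I l u -> mpow I (p * l) (fun i => p * u i).
Proof.
move=> H; elim: p => [|p IH]; first by rewrite mul0n; exact: mpow0.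
rewrite mulSn; apply: (mpow_up _ _ _ (mpow_add _ _ _ _ H IH)) => i.
by rewrite /madd mulSn.
Qed.

Lemma mpow_mu (d : mon n) : (forall i, I (xpow i (d i))) ->
  forall b : mon n, mpow I (\sum_(q < n) b q) (mu_pow d b).
Proof.
move=> Hx b; move Hk: (\sum_(q < n) b q) => k.
elim: k b Hk => [|k IH] b Hk; first exact: mpow0.
have [i pos] : exists i, 0 < b i by apply: ex_pos; rewrite Hk.
pose b' : mon n := fun q => b q - (q == i).
have Hs : \sum_(q < n) b' q = k by rewrite /b' sum_dec // Hk.
rewrite -addn1; apply: (mpow_up _ _ _ (mpow_add _ _ _ _ (IH b' Hs) (mpow1 _ (Hx i)))) => q.
rewrite /madd /mu_pow /b' /xpow; case: (q =P i) => [->|_] /=.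
  by rewrite mulnBl mul1n subnK // leq_pmull.
by rewrite subn0 addn0.
Qed.
End Pow.

Lemma d_pos n (I : mideal n) (d : mon n) : good I d -> forall q, 0 < d q.
Proof.
move=> [[Hmon H0 Hx] _] q; rewrite lt0n; apply/negP => /eqP dq.
apply: H0; apply: (Hmon (xpow q (d q))); first by case: (Hx q).
by move=> j; rewrite /xpow /mzero dq; case: (j == q).
Qed.

Lemma corner n (I : mideal n) (d : mon n) (b : mon n) :
  good I d -> mingens (mpow I (\sum_(q < n) b q)) (mu_pow d b).
Proof.
move=> G; have dp := d_pos _ _ _ G.
have [[Hmon H0 Hx] Hg] := G.
split; first by apply: (mpow_mu _ _ d) => i; case: (Hx i).
move=> w Jw wb k; rewrite leqNgt; apply/negP => ltk.
set L := \sum_(q < n) b q in Jw.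
have bk : 0 < b k.
  move: ltk; rewrite /mu_pow; case: (b k) => // _; rewrite mul0n.
have Lpos : 0 < L by apply: leq_trans bk (le_sum1 _ b k).
pose p := (d k).+1.
have Jp := mpow_mul _ _ _ _ p Jw.
have [m [Jm mp]] := ex_mingens _ _ _ Jp.
have [c Hc Hbox] := Hg (p * L) ltac:(rewrite muln_gt0; lia) m Jm.
have le1 : forall q, q != k -> c q <= p * b q.
  move=> q _; rewrite -(leq_pmul2r (dp q)); apply: leq_trans (proj1 (andP (Hbox q))) _.
  apply: leq_trans (mp q) _; rewrite -mulnA; apply: leq_mul => //; exact: wb.
have le2 : c k + 2 <= p * b k.
  have h1 := proj1 (andP (Hbox k)); have h2 := mp k; have dk := dp k.
  rewrite /mu_pow in ltk; rewrite /p in h2 *.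
  have h3 : c k * d k < ((d k).+1 * b k - 1) * d k.
    apply: (leq_ltn_trans h1); apply: (leq_ltn_trans h2).
    rewrite mulnBl mul1n -mulnA.
    have : (d k).+1 * w k < (d k).+1 * (b k * d k) by rewrite ltn_pmul2l.
    nia.
  rewrite ltn_pmul2r // in h3; lia.
have : \sum_(q < n) c q + 2 <= p * L.
  rewrite /L big_distrr /= (bigD1 k) //= [X in _ <= X](bigD1 k) //=.
  have : \sum_(q < n | q != k) c q <= \sum_(q < n | q != k) p * b q by apply: leq_sum.
  move=> H; rewrite -addnA [_ + 2]addnC addnA; exact: leq_add.
lia.
Qed.

Lemma rhs_intro n (I : mideal n) (d a b m v : mon n) (t : nat) :
  (forall q, a q <= b q) ->
  (\sum_(q < n) b q).+1 = \sum_(q < n) a q + t ->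
  mingens (mpow I (\sum_(q < n) a q + t)) m ->
  in_box d b m ->
  (forall q, m q <= v q + a q * d q) ->
  msum (fun tt : mon n => \sum_(i < n) tt i = t.-1)
       (fun tt => mmul (mu_pow d tt) (Isub I d (madd tt a))) v.
Proof.
move=> ab Hs Hm Hbox Hmv.
pose tt : mon n := fun q => b q - a q.
have Htt : forall q, madd tt a q = b q by move=> q; rewrite /madd /tt subnK.
have Hsum : \sum_(q < n) madd tt a q = \sum_(q < n) b q by apply: eq_bigr => q _.
have Hsum2 : \sum_(q < n) madd tt a q = \sum_(q < n) tt q + \sum_(q < n) a q.
  by rewrite /madd big_split.
exists tt; first by lia.
exists (fun q => tt q * d q + (m q - b q * d q)); last first.
  move=> q; have := proj1 (andP (Hbox q)); have := Hmv q; rewrite /tt mulnBl.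
  have := leq_mul (ab q) (leqnn (d q)); lia.
exists (fun q => m q - b q * d q) => //.
exists (fun q => m q - b q * d q) => //.
exists m => //; last by move=> q; rewrite Htt.
split.
  by move=> q; rewrite Htt; exact: Hbox.
by rewrite Hsum Hs.
Qed.

Theorem mainTheorem16 (n : nat) (I : mideal n) (d : mon n) (a : mon n) (t : nat) :
  good I d -> 0 < t ->
  forall v : mon n,
    mcolon (mpow I (\sum_(i < n) a i + t)) (mu_pow d a) v <->
    msum (fun tt : mon n => \sum_(i < n) tt i = t.-1)
         (fun tt => mmul (mu_pow d tt) (Isub I d (madd tt a))) v.
Proof.
move=> G tpos v; split.
- rewrite /mcolon => Hw.
  set L := \sum_(i < n) a i + t in Hw.
  have [m [Jm mw]] := ex_mingens _ _ _ Hw.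
  have [b Hb Hbox] := G.2 L ltac:(rewrite /L; lia) m Jm.
  have Hmv : forall q, m q <= v q + a q * d q by move=> q; exact: (mw q).
  case: (boolP [forall q, a q <= b q]) => [/forallP ab|/forallPn [i]].
    by apply: (rhs_intro _ _ _ _ b m) => //; rewrite Hb /L; lia.
  rewrite -ltnNge => bi.
  pose c : mon n := fun q => maxn (a q) (b q).
  have bc : forall q, b q <= c q by move=> q; rewrite leq_max leqnn orbT.
  have ac : forall q, a q <= c q by move=> q; rewrite leq_max leqnn.
  have Hc : \sum_(q < n) b q < \sum_(q < n) c q.
    apply: (sum_lt _ b c i bc); rewrite /c leq_max bi //.
  have [be [Hbe Hbes]] := intermediate _ L a c ac ltac:(apply/andP; split; rewrite /L; lia).
  have [j aj] : exists j, a j < be j by apply: ex_gt; rewrite Hbes /L; lia.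
  pose be' : mon n := fun q => be q - (q == j).
  have Hs' : \sum_(q < n) be' q = L.-1 by rewrite /be' sum_dec ?Hbes //; lia.
  apply: (rhs_intro _ _ _ _ be' (mu_pow d be)).
  + move=> q; rewrite /be'; case: (q =P j) => [->|_] /=; first lia.
    by rewrite subn0; case/andP: (Hbe q).
  + by rewrite Hs' /L; lia.
  + by rewrite -/L -Hbes; apply: corner.
  + move=> q; rewrite /be' /mu_pow; case: (q =P j) => [->|_] /=.
      rewrite subn1 prednK; last by lia.
      by rewrite leqnn andbT leq_mul2r leq_pred orbT.
    by rewrite subn0 leqnn /= leq_mul2r leqnSn orbT.
  + move=> q; rewrite /mu_pow; case/andP: (Hbe q) => _.
    rewrite /c leq_max => /orP [h|h].
      by apply: leq_trans (leq_mul h (leqnn _)) _; apply: leq_addl.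
    apply: leq_trans (leq_mul h (leqnn _)) _.
    apply: leq_trans (proj1 (andP (Hbox q))) _; exact: Hmv.
- move=> [tt Htt [u0 [v' [u [m [Hbox Hm] Hu] uv'] Hu0] u0v]].
  rewrite /mcolon.
  have Hs : (\sum_(i < n) madd tt a i).+1 = \sum_(i < n) a i + t.
    rewrite /madd big_split /= Htt; lia.
  rewrite Hs in Hm.
  apply: (mpow_up _ _ _ _ _ (proj1 Hm)) => q.
  have h1 := proj1 (andP (Hbox q)); have h2 := Hu q; have h3 := uv' q.
  have h4 := Hu0 q; have h5 := u0v q.
  rewrite /madd /mu_pow in h1 h2 h4 *; rewrite mulnDl in h1 h2.
  lia.
Qed.
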